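(* Let $\xi$ be an $(I,T)$-system with the stuttering property, and let $n\ge 0$. Then $d(I,T) \leq n$ if and only if the formula $I(S_1)$ is redundant in $\exists S_0\cdots\exists S_n\,[\,I(S_0)\wedge I(S_1) \wedge T_{0,1}\wedge\dots\wedge T_{n,n+1}\,]$, i.e. if and only if $$\exists S_0\cdots\exists S_n\,[\,I(S_0)\wedge T_{0,1}\wedge\dots\wedge T_{n,n+1}\,] \;\equiv\; \exists S_0\cdots\exists S_n\,[\,I(S_0)\wedge I(S_1)\wedge T_{0,1}\wedge\dots\wedge T_{n,n+1}\,]$$ as Boolean functions of $S_{n+1}$.
   Context: An $(I,T)$-system is a transition system over a finite set $S$ of Boolean state variables, given by a propositional formula $I(S)$ (initial states) and a propositional formula $T(S,S')$ (transition relation), where $S'$ is a copy of $S$. A state is a complete assignment to $S$. A trace $(s_0,\dots,s_k)$ is valid if $I(s_0)=1$ and $T(s_i,s_{i+1})=1$ for $i=0,\dots,k-1$; then $s_k$ is reachable in $k$ transitions. The system has the stuttering property if $T(s,s)=1$ for every state $s$. The reachability diameter $d(I,T)$ is the smallest $n\ge0$ such that every state reachable in some number of transitions is reachable in at most $n$ transitions. Notation: $S_j$ is a copy of the state variables for time frame $j$; $T_{j,j+1}$ denotes $T(S_j,S_{j+1})$; $I(S_0)$, $I(S_1)$ are copies of $I$ over $S_0$, $S_1$. A conjunct $A$ is redundant in $\exists W[A\wedge B]$ if $\exists W[A\wedge B]\equiv\exists W[B]$, where $\equiv$ means equality as Boolean functions of the free variables. *)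

(* Defs.v *)
From mathcomp Require Import all_boot.
Set Implicit Arguments. Unset Strict Implicit. Unset Printing Implicit Defensive.

(* States over a finite set V of Boolean state variables: complete assignments. *)
Definition state (V : finType) := {ffun V -> bool}.

(* A propositional formula I(S) / T(S,S') is represented by the Boolean
   function it denotes. *)

Definition chain (V : finType) (T : state V -> state V -> bool)
  (tr : nat -> state V) (k : nat) : Prop :=
  forall i, i < k -> T (tr i) (tr i.+1).

Definition reachable_in (V : finType) (I : state V -> bool)
  (T : state V -> state V -> bool) (k : nat) (s : state V) : Prop :=
  exists tr : nat -> state V, [/\ I (tr 0), chain T tr k & tr k = s].

Definition reachable (V : finType) (I : state V -> bool)
  (T : state V -> state V -> bool) (s : state V) : Prop :=
  exists k, reachable_in I T k s.

Definition stuttering (V : finType) (T : state V -> state V -> bool) : Prop :=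
  forall s : state V, T s s.

Definition diam_bound (V : finType) (I : state V -> bool)
  (T : state V -> state V -> bool) (n : nat) : Prop :=
  forall s, reachable I T s -> exists2 k, k <= n & reachable_in I T k s.

Definition is_diameter (V : finType) (I : state V -> bool)
  (T : state V -> state V -> bool) (d : nat) : Prop :=
  diam_bound I T d /\ forall m, diam_bound I T m -> d <= m.

(* Main.v *)
Require Import Defs.
From mathcomp Require Import all_boot.
From mathcomp Require Import zify.

Section S.
Variables (V : finType) (I : state V -> bool) (T : state V -> state V -> bool).
Hypothesis st : stuttering T.

Lemma pad k m s : reachable_in I T k s -> k <= m -> reachable_in I T m s.
Proof.
move=> [tr [h0 hc hk]] km.
exists (fun i => tr (i - (m - k))); split.
- by rewrite sub0n.
- move=> i im /=.
  case: (ltnP i (m - k)) => hi.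
  + have -> : i - (m - k) = 0 by lia.
    have -> : i.+1 - (m - k) = 0 by lia.
    exact: st.
  + have -> : i.+1 - (m - k) = (i - (m - k)).+1 by lia.
    apply: hc; lia.
- have -> : m - (m - k) = k by lia.
  exact: hk.
Qed.

Lemma rhs_iff n s :
  (exists tr : nat -> state V,
        [/\ tr n.+1 = s, I (tr 0), I (tr 1) & chain T tr n.+1]) <->
  reachable_in I T n s.
Proof.
split.
- move=> [tr [hs h0 h1 hc]]; exists (fun i => tr i.+1); split => //.
  by move=> i hi; apply: hc.
- move=> [tr [h0 hc hs]]; exists (fun i => tr i.-1); split => //.
  move=> [|i] hi /=; first exact: st.
  by apply: hc.
Qed.

Lemma lhs_iff n s :
  (exists tr : nat -> state V,
        [/\ tr n.+1 = s, I (tr 0) & chain T tr n.+1]) <->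
  reachable_in I T n.+1 s.
Proof.
split; move=> [tr [a b c]]; exists tr; by split.
Qed.

Lemma collapse n :
  (forall s, reachable_in I T n.+1 s -> reachable_in I T n s) ->
  forall k s, reachable_in I T k s -> reachable_in I T n s.
Proof.
move=> H; elim=> [|k IH] s hr.
- by apply: pad hr _.
- case: (leqP k.+1 n) => hk; first by apply: pad hr hk.
  move: hr => [tr [h0 hc hs]].
  have hk' : reachable_in I T k (tr k).
    exists tr; split => // i hi; apply: hc; lia.
  move: (IH _ hk') => [tr2 [g0 gc gs]].
  apply: H.
  exists (fun i => if i <= n then tr2 i else s); split => //.
  + move=> i hi /=.
    case: (ltnP i n) => hin.
    * rewrite (ltnW hin). exact: gc.
    * have -> : i = n by lia.
      rewrite leqnn gs -hs; apply: hc; lia.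
  + by rewrite ltnn.
Qed.
End S.

Theorem proposition1 (V : finType) (I : state V -> bool)
  (T : state V -> state V -> bool) (n : nat) (d : nat) :
  stuttering T -> is_diameter I T d ->
  (d <= n <->
   forall s : state V,
     (exists tr : nat -> state V,
        [/\ tr n.+1 = s, I (tr 0) & chain T tr n.+1]) <->
     (exists tr : nat -> state V,
        [/\ tr n.+1 = s, I (tr 0), I (tr 1) & chain T tr n.+1])).
Proof.
move=> st [hb hmin]; split.
- move=> dn s; rewrite lhs_iff (@rhs_iff _ _ _ st); split.
  + move=> hr.
    have [k kd hk] : exists2 k, k <= d & reachable_in I T k s.
      by apply: hb; exists n.+1.
    apply: (@pad _ _ _ st _ _ _ hk); lia.
  + move=> hr; apply: (@pad _ _ _ st _ _ _ hr); lia.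
- move=> H; apply: hmin => s [k hk]; exists n => //.
  apply: (@collapse _ _ _ st _ _ _ _ hk) => s' hs'.
  by apply/(@rhs_iff _ _ _ st _ _)/H/lhs_iff.
Qed.
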